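(* Let $\mathfrak{l}$ be a finite-dimensional restricted Lie algebra over an algebraically closed field $\mathbb{K}$ of characteristic $p>0$, with $p$-map $a\mapsto a^{[p]}$, and let $\chi\in\mathfrak{l}^\ast$. On the vector space $\mathfrak{l}_\chi=\mathfrak{l}\oplus\mathbb{K}c$ define the Lie bracket $[a+\alpha c,b+\beta c]=[a,b]$ (so that $c$ is central and $\mathfrak{l}_\chi$ is the trivial central extension of $\mathfrak{l}$ as a Lie algebra) and the map $$(a+\alpha c)^{[p]}=a^{[p]}+(\chi(a)^p+\alpha^p)c\qquad(a\in\mathfrak{l},\ \alpha\in\mathbb{K}).$$ Then this defines a structure of restricted Lie algebra on $\mathfrak{l}_\chi$.
   Context: A restricted Lie algebra is a Lie algebra with a $p$-map satisfying Jacobson's axioms: $(\beta a)^{[p]}=\beta^p a^{[p]}$, $\operatorname{ad}(a^{[p]})=(\operatorname{ad}a)^p$, and $(a+b)^{[p]}=a^{[p]}+b^{[p]}+\sum_{i=1}^{p-1}s_i(a,b)$, where $i\,s_i(a,b)$ is the coefficient of $T^{i-1}$ in $(\operatorname{ad}(aT+b))^{p-1}(a)$. *)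

(* Defs.v *)
From HB Require Import structures.
From mathcomp Require Import all_boot all_order all_algebra.
Set Implicit Arguments. Unset Strict Implicit. Unset Printing Implicit Defensive.
Import GRing.Theory.
Local Open Scope ring_scope.

Definition is_lie_bracket (K : fieldType) (L : lmodType K) (br : L -> L -> L) : Prop :=
  [/\ (forall (k : K) (x y z : L), br (k *: x + y) z = k *: br x z + br y z),
      (forall (k : K) (x y z : L), br z (k *: x + y) = k *: br z x + br z y),
      (forall x : L, br x x = 0) &
      (forall x y z : L, br x (br y z) + br y (br z x) + br z (br x y) = 0)].

(* i * s_i(a,b) = coefficient of T^(i-1) in (ad(aT+b))^(p-1)(a).
   Since ad(aT+b) = T ad a + ad b, expanding the (p-1)-fold composition gives
   the sum, over all words w in {a,b}^(p-1) with exactly i-1 letters a, of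
   ad(w_1) o ... o ad(w_(p-1)) applied to a  (true = a, false = b). *)
Definition jacobson_coef (K : fieldType) (L : lmodType K) (br : L -> L -> L)
    (p : nat) (a b : L) (i : nat) : L :=
  \sum_(w : (p.-1).-tuple bool | count id w == i.-1)
     foldr (fun (x : bool) v => br (if x then a else b) v) a w.

(* s_i(a,b) itself (i is invertible in K for 1 <= i <= p-1, p = char K). *)
Definition jacobson_s (K : fieldType) (L : lmodType K) (br : L -> L -> L)
    (p : nat) (a b : L) (i : nat) : L :=
  (i%:R : K)^-1 *: jacobson_coef br p a b i.

Definition is_pmap (K : fieldType) (L : lmodType K) (br : L -> L -> L)
    (p : nat) (pm : L -> L) : Prop :=
  [/\ (forall (beta : K) (a : L), pm (beta *: a) = beta ^+ p *: pm a),
      (forall a b : L, br (pm a) b = iter p (br a) b) &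
      (forall a b : L, pm (a + b) =
          pm a + pm b + \sum_(1 <= i < p) jacobson_s br p a b i)].

Definition restricted_lie (K : fieldType) (L : lmodType K) (br : L -> L -> L)
    (p : nat) (pm : L -> L) : Prop :=
  is_lie_bracket br /\ is_pmap br p pm.

(* The extension l_chi = l (+) K c, realised as L * K with c = (0, 1). *)
Definition ext_br (K : fieldType) (L : lmodType K) (br : L -> L -> L)
    (x y : (L * K^o)%type) : (L * K^o)%type := (br x.1 y.1, 0).

Definition ext_pm (K : fieldType) (L : lmodType K) (pm : L -> L) (p : nat)
    (chi : L -> K) (x : (L * K^o)%type) : (L * K^o)%type :=
  (pm x.1, (chi x.1 ^+ p + (x.2 : K) ^+ p : K)).

(* Main.v *)
Require Import Defs.
From HB Require Import structures.
From mathcomp Require Import all_boot all_order all_algebra.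
Import GRing.Theory.
Local Open Scope ring_scope.

Section Aux.
Variables (K : fieldType) (L : lmodType K) (br : L -> L -> L).

Lemma foldr_ext1 (a b : (L * K^o)%type) (w : seq bool) :
  (foldr (fun (x : bool) v => ext_br br (if x then a else b) v) a w).1
  = foldr (fun (x : bool) v => br (if x then a.1 else b.1) v) a.1 w.
Proof. by elim: w => [|x w IH] //=; rewrite IH; case: x. Qed.

Lemma foldr_ext (a b : (L * K^o)%type) (w : seq bool) : (0 < size w)%N ->
  foldr (fun (x : bool) v => ext_br br (if x then a else b) v) a w
  = (foldr (fun (x : bool) v => br (if x then a.1 else b.1) v) a.1 w, 0).
Proof.
case: w => [|x w] //= _.
by rewrite /ext_br /= -(foldr_ext1 a b w); case: x.
Qed.

Lemma sum_pair (I : finType) (P : pred I) (F : I -> L) :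
  \sum_(i | P i) ((F i, 0) : (L * K^o)%type) = (\sum_(i | P i) F i, 0).
Proof.
elim/big_rec2: _ => [//|i y1 y2 _ ->].
apply: injective_projections => //=; exact: addr0.
Qed.

Lemma coef_ext (p : nat) (a b : (L * K^o)%type) i : (1 < p)%N ->
  jacobson_coef (ext_br br) p a b i = (jacobson_coef br p a.1 b.1 i, 0).
Proof.
move=> hp; rewrite /jacobson_coef -sum_pair; apply: eq_bigr => w _.
by apply: foldr_ext; rewrite size_tuple -ltnS prednK // ltnW.
Qed.

Lemma s_ext (p : nat) (a b : (L * K^o)%type) i : (1 < p)%N ->
  jacobson_s (ext_br br) p a b i = (jacobson_s br p a.1 b.1 i, 0).
Proof.
move=> hp; rewrite /jacobson_s coef_ext //.
by apply: injective_projections => //=; rewrite scaler0.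
Qed.

Lemma fst_sum (m n : nat) (F : nat -> (L * K^o)%type) :
  (\sum_(m <= i < n) F i).1 = \sum_(m <= i < n) (F i).1.
Proof. by apply: (big_morph fst) => //. Qed.

Lemma snd_sum (m n : nat) (F : nat -> (L * K^o)%type) :
  (\sum_(m <= i < n) F i).2 = \sum_(m <= i < n) (F i).2.
Proof. by apply: (big_morph snd) => //. Qed.

End Aux.

Theorem proposition1p2p3 (K : closedFieldType) (p : nat) (hp : p \in [pchar K])
    (L : vectType K) (br : L -> L -> L) (pm : L -> L)
    (hL : restricted_lie br p pm) (chi : {linear L -> K^o}) :
  @restricted_lie K (L * K^o)%type (ext_br br) p (ext_pm pm p (fun a => chi a : K)).
Proof.
have pr := pcharf_prime hp.
have p1 : (1 < p)%N by apply: prime_gt1.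
case: hL => [[h1 h2 h3 h4] [q1 q2 q3]].
split.
  split.
  - move=> k x y z; rewrite /ext_br /=; congr (_, _); first exact: h1.
    by rewrite /= ?scaler0 ?mulr0 addr0.
  - move=> k x y z; rewrite /ext_br /=; congr (_, _); first exact: h2.
    by rewrite /= ?scaler0 ?mulr0 addr0.
  - by move=> x; rewrite /ext_br h3.
  - move=> x y z; apply: injective_projections => /=; [exact: h4 | by rewrite !addr0].
split.
- move=> beta a; rewrite /ext_pm /=; congr (_, _); first exact: q1.
  rewrite /GRing.scale /= linearZ /= /GRing.scale /=.
  by rewrite mulrDr !exprMn.
- move=> a b.
  have ->: iter p (ext_br br a) b = (iter p (br a.1) b.1, 0).
    case: p p1 {hp pr q1 q2 q3} => [//|n] _.
    elim: n => [//|n IH] /=; rewrite /= in IH; by rewrite IH.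
  by rewrite /ext_br /ext_pm /= q2.
- move=> a b.
  have frob (x y : K) : (x + y) ^+ p = x ^+ p + y ^+ p.
    by rewrite -!(pFrobenius_autE hp) pFrobenius_autD_comm //; exact: mulrC.
  apply: injective_projections.
  + rewrite /= fst_sum q3.
    congr (_ + _). apply: eq_bigr => i _. by rewrite s_ext.
  + rewrite /= snd_sum.
    rewrite big1; last by move=> i _; rewrite s_ext.
    rewrite linearD /= frob frob addr0.
    by rewrite -!addrA; congr (_ + _); rewrite addrCA.
Qed.
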